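(* For $n\ge 4$ let $R_n$ be the tree obtained from the star $S_{n-1}$ by adding a new vertex adjacent to one leaf of $S_{n-1}$. Then $$av_1(R_n)=\frac{5n-13+(n+1)2^{n-4}}{2n-5+2^{n-3}}=\frac{n+1}{2}-\frac{n^2-\tfrac{13}{2}n+\tfrac{21}{2}}{2n-5+2^{n-3}}=\frac n2+\frac{2^{n-4}-n^2+\tfrac{15}{2}n-13}{2n-5+2^{n-3}}.$$ Consequently $av_1(R_n)<\frac{n+1}{2}$ for all $n\ge4$, $av_1(R_n)>\frac n2$ for all $n\ge 4$ with $n\notin\{6,7,8\}$, and $\lim_{n\to\infty}\big(av_1(R_n)-\frac{n+1}{2}\big)=0$.
   Context: For a graph $G=(V,E)$, a set $S\subseteq V$ is a $1$-nearly independent vertex set if the subgraph induced by $S$ has exactly one edge. $\sigma_1(G)$ is the number of such sets, $S_1(G)$ the sum of their sizes, and $av_1(G)=S_1(G)/\sigma_1(G)$. $S_m$ denotes the star on $m$ vertices. *)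

(* Defs.v *)
From HB Require Import structures.
From mathcomp Require Import all_boot all_order all_algebra.
Set Implicit Arguments. Unset Strict Implicit. Unset Printing Implicit Defensive.
Import Order.TTheory GRing.Theory Num.Theory.

(* A simple graph on a finite vertex type T is given by a symmetric,
   irreflexive edge relation e.  The edges of the subgraph induced by S are
   the unordered pairs {x,y} with x,y in S and e x y. *)
Definition induced_edges (T : finType) (e : rel T) (S : {set T}) : {set {set T}} :=
  [set [set x; y] | x in S, y in S & e x y].

Definition nearly_indep1 (T : finType) (e : rel T) (S : {set T}) : bool :=
  #|induced_edges e S| == 1%N.

Definition sigma1 (T : finType) (e : rel T) : nat :=
  #|[set S : {set T} | nearly_indep1 e S]|.

Definition S1 (T : finType) (e : rel T) : nat :=
  \sum_(S : {set T} | nearly_indep1 e S) #|S|.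

Definition av1 (T : finType) (e : rel T) : rat :=
  ((S1 e)%:R / (sigma1 e)%:R)%R.

(* The tree R_n on vertex set {0,...,n-1}: the star S_{n-1} has centre 0 and
   leaves 1,...,n-2; the new vertex n-1 is adjacent to the leaf 1. *)
Definition Redge (n a b : nat) : bool :=
  ((a == 0%N) && (0 < b < n.-1)) || ((a == 1%N) && (b == n.-1)).

Definition Rrel (n : nat) : rel 'I_n :=
  fun i j => Redge n i j || Redge n j i.
Arguments Rrel n : clear implicits.

(* Main.v *)
Require Import Defs.
From HB Require Import structures.
From mathcomp Require Import all_boot all_order all_algebra zify.
Import Order.TTheory GRing.Theory Num.Theory.
Set Implicit Arguments. Unset Strict Implicit.

Lemma ni1P (T : finType) (e : rel T) (S : {set T}) :
  nearly_indep1 e S -> exists x y, [/\ x \in S, y \in S, e x y &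
    forall a b, a \in S -> b \in S -> e a b -> [set a; b] = [set x; y]].
Proof.
move/cards1P=> [E hE].
have : E \in induced_edges e S by rewrite hE set11.
case/imset2P=> x y hx; rewrite inE => /andP[hy hxy] hEq; subst E.
exists x, y; split=> // a b ha hb hab.
have : [set a; b] \in induced_edges e S.
  by apply/imset2P; exists a b => //; rewrite inE hb.
by rewrite hE => /set1P.
Qed.

Lemma ni1I (T : finType) (e : rel T) (S : {set T}) x y :
  x \in S -> y \in S -> e x y ->
  (forall a b, a \in S -> b \in S -> e a b -> [set a; b] = [set x; y]) ->
  nearly_indep1 e S.
Proof.
move=> hx hy hxy U; apply/cards1P; exists [set x; y]; apply/setP=> E.
rewrite inE; apply/imset2P/eqP.
  by case=> a b ha; rewrite inE => /andP[hb hab] ->; apply: U.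
by move=> ->; exists x y => //; rewrite inE hy.
Qed.

Section R.
Variable k : nat.
Local Notation N := k.+4.
Definition v0 : 'I_N := inord 0.
Definition v1 : 'I_N := inord 1.
Definition vl : 'I_N := inord k.+3.
Definition Lset : {set 'I_N} := ~: [set v0; v1; vl].

Lemma v0E : val v0 = 0. Proof. by rewrite /= inordK. Qed.
Lemma v1E : val v1 = 1. Proof. by rewrite /= inordK. Qed.
Lemma vlE : val vl = k.+3. Proof. by rewrite /= inordK. Qed.

Lemma inL (i : 'I_N) : (i \in Lset) = [&& val i != 0, val i != 1 & val i != k.+3].
Proof. by rewrite !inE -!val_eqE v0E v1E vlE; case: (_ == 0); case: (_ == 1); case: (_ == k.+3). Qed.

Lemma RrelE (x y : 'I_N) : Rrel N x y =
  ((x == v0) && ((y == v1) || (y \in Lset))) || ((y == v0) && ((x == v1) || (x \in Lset)))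
  || ((x == v1) && (y == vl)) || ((x == vl) && (y == v1)).
Proof.
rewrite /Rrel /Redge !inL -!val_eqE v0E v1E vlE /=.
have := ltn_ord x; have := ltn_ord y.
move: (val x) (val y) => a b ha hb.
apply/idP/idP; lia.
Qed.

Lemma vcase (z : 'I_N) : [\/ z = v0, z = v1, z = vl | z \in Lset].
Proof.
rewrite inL.
case: (eqVneq (val z) 0) => h0; first by constructor 1; apply: val_inj; rewrite h0 v0E.
case: (eqVneq (val z) 1) => h1; first by constructor 2; apply: val_inj; rewrite h1 v1E.
case: (eqVneq (val z) k.+3) => h2; first by constructor 3; apply: val_inj; rewrite h2 vlE.
by constructor 4; apply/and3P.
Qed.

Lemma d01 : (v0 == v1) = false. Proof. by rewrite -val_eqE v0E v1E. Qed.
Lemma d0l : (v0 == vl) = false. Proof. by rewrite -val_eqE v0E vlE. Qed.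
Lemma d1l : (v1 == vl) = false. Proof. by rewrite -val_eqE vlE v1E. Qed.
Lemma d10 : (v1 == v0) = false. Proof. by rewrite eq_sym d01. Qed.
Lemma dl0 : (vl == v0) = false. Proof. by rewrite eq_sym d0l. Qed.
Lemma dl1 : (vl == v1) = false. Proof. by rewrite eq_sym d1l. Qed.
Lemma L0 : (v0 \in Lset) = false. Proof. by rewrite inL v0E. Qed.
Lemma L1 : (v1 \in Lset) = false. Proof. by rewrite inL v1E. Qed.
Lemma Ll : (vl \in Lset) = false. Proof. by rewrite inL vlE eqxx !andbF. Qed.
Definition dE := (d01, d0l, d1l, d10, dl0, dl1, L0, L1, Ll).

Lemma cardL : #|Lset| = k.+1.
Proof.
have := cardsC [set v0; v1; vl]; rewrite card_ord -/Lset.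
rewrite -setUA !cardsU1 cards1 !inE !dE /=. by move=> /eqP; rewrite -[N]/(3 + k.+1) eqn_add2l => /eqP.
Qed.


Lemma Lne0 z : z \in Lset -> [/\ (z == v0) = false, (z == v1) = false & (z == vl) = false].
Proof.
move=> hz; have: z \notin [set v0; v1; vl] by rewrite -in_setC.
by rewrite !inE !negb_or => /andP[/andP[/negPf a /negPf b] /negPf c].
Qed.
Lemma Lne z : z \in Lset -> (z == v0) = false /\ (z == v1) = false /\ (z == vl) = false /\
   (v0 == z) = false /\ (v1 == z) = false /\ (vl == z) = false.
Proof. by move/Lne0=> [a b c]; rewrite ![_ == z]eq_sym a b c. Qed.

Definition F1 := [set v1 |: (vl |: X) | X in powerset Lset].
Definition F2 : {set {set 'I_N}} := [set [set v0; v1]].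
Definition F3a := [set v0 |: [set i] | i in Lset].
Definition F3b := [set v0 |: (vl |: [set i]) | i in Lset].

Lemma fam_fwd S : nearly_indep1 (Rrel N) S ->
  (S \in F1) || (S \in F2) || (S \in F3a) || (S \in F3b).
Proof.
case/ni1P=> x [y [hx hy hxy U]].
have uni : forall a b c d, a \in S -> b \in S -> c \in S -> d \in S ->
    Rrel N a b -> Rrel N c d -> a \in [set c; d].
  move=> a b c d ha hb hc hd hab hcd.
  by rewrite (U c d) // -(U a b) // set21.
case h0: (v0 \in S); last first.
  have [h1 hl] : v1 \in S /\ vl \in S.
    move: hxy; rewrite RrelE.
    case/orP=> [/orP[/orP[/andP[/eqP ex _]|/andP[/eqP ey _]]|/andP[/eqP ex /eqP ey]]|/andP[/eqP ex /eqP ey]].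
    - by move: hx; rewrite ex h0.
    - by move: hy; rewrite ey h0.
    - by move: hx hy; rewrite ex ey.
    - by move: hx hy; rewrite ex ey.
  apply/orP; left; apply/orP; left; apply/orP; left.
  apply/imsetP; exists (S :&: Lset); first by rewrite powersetE subsetIr.
  apply/setP=> z; rewrite !inE.
  case: (vcase z) => [->|->|->|hz].
  - by rewrite h0 !dE.
  - by rewrite h1 eqxx.
  - by rewrite hl dl1 eqxx.
  - by case: (Lne hz) => -> [-> [-> _]] /=; rewrite andbT.
case h1: (v1 \in S).
  apply/orP; left; apply/orP; left; apply/orP; right.
  apply/set1P; apply/eqP; rewrite eqEsubset; apply/andP; split; last first.
    by apply/subsetP=> z; rewrite !inE => /orP[]/eqP->.
  apply/subsetP=> z hz; case: (vcase z) => [->|->|ez|hL].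
  - by rewrite !inE eqxx.
  - by rewrite !inE eqxx orbT.
  - rewrite ez in hz.
    rewrite ez; apply: (uni vl v1 v0 v1 hz h1 h0 h1); rewrite !RrelE !eqxx ?dE /= ?orbT //.
  - apply: (uni z v0 v0 v1 hz h0 h0 h1); rewrite !RrelE !eqxx ?hL ?dE /= ?orbT //.
have [i hi hiS] : exists2 i, i \in Lset & i \in S.
  move: hxy; rewrite RrelE.
  case/orP=> [/orP[/orP[/andP[/eqP ex /orP[/eqP ey|ey]]|/andP[/eqP ey /orP[/eqP ex|ex]]]|/andP[/eqP ex /eqP ey]]|/andP[/eqP ex /eqP ey]].
  - by move: hy; rewrite ey h1.
  - by exists y.
  - by move: hx; rewrite ex h1.
  - by exists x.
  - by move: hx; rewrite ex h1.
  - by move: hy; rewrite ey h1.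
have sub : forall z, z \in S -> z \in Lset -> z = i.
  move=> z hz hL; have := uni z v0 v0 i hz h0 h0 hiS.
  rewrite !RrelE !eqxx hL hi ?dE /= ?orbT => /(_ isT isT).
  by rewrite !inE; case: (Lne hL) => -> _ /= /eqP.
case hl: (vl \in S).
  apply/orP; right; apply/imsetP; exists i => //.
  apply/setP=> z; rewrite !inE; case: (vcase z) => [->|->|->|hz].
  - by rewrite h0 eqxx.
  - by rewrite h1 !dE; case: (Lne hi) => _ [_ [_ [_ [-> _]]]].
  - by rewrite hl eqxx orbT.
  - case: (Lne hz) => -> [_ [-> _]] /=.
    by apply/idP/eqP => [/sub ->//|->].
apply/orP; left; apply/orP; right; apply/imsetP; exists i => //.
apply/setP=> z; rewrite !inE; case: (vcase z) => [->|->|->|hz].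
- by rewrite h0 eqxx.
- by rewrite h1 !dE; case: (Lne hi) => _ [_ [_ [_ [-> _]]]].
- by rewrite hl !dE; case: (Lne hi) => _ [_ [_ [_ [_ ->]]]].
- case: (Lne hz) => -> _ /=.
  by apply/idP/eqP => [/sub ->//|->].
Qed.


Ltac lclean h := let e1 := fresh in let e2 := fresh in let e3 := fresh in
  let e4 := fresh in let e5 := fresh in let e6 := fresh in
  case: (Lne h) => e1 [e2 [e3 [e4 [e5 e6]]]]; rewrite ?e1 ?e2 ?e3 ?e4 ?e5 ?e6 ?h.

Lemma bwd1 (X : {set 'I_N}) : X \subset Lset -> nearly_indep1 (Rrel N) (v1 |: (vl |: X)).
Proof.
move=> hX; apply: (ni1I (x:=v1) (y:=vl)); rewrite ?inE ?eqxx ?orbT //.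
  by rewrite RrelE !eqxx /= orbT.
move=> a b; rewrite !inE => ha hb.
case/orP: ha => [/eqP->|/orP[/eqP->|/(subsetP hX) ha]]; case/orP: hb => [/eqP->|/orP[/eqP->|/(subsetP hX) hb]];
  rewrite RrelE ?eqxx ?dE /=; try lclean ha; try lclean hb; rewrite /= ?andbF ?orbF //.
all: try by [].
all: try by move=> _; rewrite setUC.
Qed.

Lemma bwd2 : nearly_indep1 (Rrel N) [set v0; v1].
Proof.
apply: (ni1I (x:=v0) (y:=v1)); rewrite ?inE ?eqxx ?orbT //.
  by rewrite RrelE !eqxx.
move=> a b; rewrite !inE => ha hb.
case/orP: ha => /eqP->; case/orP: hb => /eqP->;
  rewrite RrelE ?eqxx ?dE /= ?andbF ?orbF //.
by move=> _; rewrite setUC.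
Qed.

Lemma bwd3a i : i \in Lset -> nearly_indep1 (Rrel N) (v0 |: [set i]).
Proof.
move=> hi; apply: (ni1I (x:=v0) (y:=i)); rewrite ?inE ?eqxx ?orbT //.
  by rewrite RrelE !eqxx hi orbT.
move=> a b; rewrite !inE => ha hb.
case/orP: ha => /eqP->; case/orP: hb => /eqP->;
  rewrite RrelE ?eqxx ?dE /=; lclean hi; rewrite /= ?andbF ?orbF //.
all: try by [].
all: try by move=> _; rewrite setUC.
Qed.

Lemma bwd3b i : i \in Lset -> nearly_indep1 (Rrel N) (v0 |: (vl |: [set i])).
Proof.
move=> hi; apply: (ni1I (x:=v0) (y:=i)); rewrite ?inE ?eqxx ?orbT //.
  by rewrite RrelE !eqxx hi orbT.
move=> a b; rewrite !inE => ha hb.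
case/orP: ha => [/eqP->|/orP[]/eqP->]; case/orP: hb => [/eqP->|/orP[]/eqP->];
  rewrite RrelE ?eqxx ?dE /=; lclean hi; rewrite /= ?andbF ?orbF //.
all: try by [].
all: try by move=> _; rewrite setUC.
Qed.


Lemma famE S : nearly_indep1 (Rrel N) S = (S \in F1 :|: F2 :|: F3a :|: F3b).
Proof.
rewrite !in_setU; apply/idP/idP; first exact: fam_fwd.
case/orP=> [/orP[/orP[|]|]|].
- by case/imsetP=> X; rewrite powersetE => hX ->; apply: bwd1.
- by move/set1P->; apply: bwd2.
- by case/imsetP=> i hi ->; apply: bwd3a.
- by case/imsetP=> i hi ->; apply: bwd3b.
Qed.

Lemma F1c S : S \in F1 -> v0 \notin S.
Proof.
case/imsetP=> X; rewrite powersetE => hX ->; rewrite !inE !dE /=.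
by apply/negP => /(subsetP hX); rewrite L0.
Qed.
Lemma F2c S : S \in F2 -> (v0 \in S) && (v1 \in S).
Proof. by move/set1P->; rewrite !inE !eqxx orbT. Qed.
Lemma F3ac S : S \in F3a -> [&& v0 \in S, v1 \notin S & vl \notin S].
Proof. by case/imsetP=> i hi ->; rewrite !inE !eqxx !dE /=; lclean hi. Qed.
Lemma F3bc S : S \in F3b -> [&& v0 \in S, v1 \notin S & vl \in S].
Proof. by case/imsetP=> i hi ->; rewrite !inE !eqxx !dE /= ?orbT; lclean hi. Qed.

Lemma sumU (A B : {set {set 'I_N}}) (g : {set 'I_N} -> nat) : [disjoint A & B] ->
  \sum_(S in A :|: B) g S = \sum_(S in A) g S + \sum_(S in B) g S.
Proof. by move=> d; rewrite -bigU //; apply: eq_bigl => S; rewrite !inE. Qed.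

Lemma sumFam (g : {set 'I_N} -> nat) :
  \sum_(S | nearly_indep1 (Rrel N) S) g S =
  \sum_(X in powerset Lset) g (v1 |: (vl |: X)) + g [set v0; v1] +
  \sum_(i in Lset) g (v0 |: [set i]) + \sum_(i in Lset) g (v0 |: (vl |: [set i])).
Proof.
rewrite (eq_bigl (fun S => S \in F1 :|: F2 :|: F3a :|: F3b)); last by move=> S; rewrite famE.
rewrite sumU; last first.
  rewrite -setI_eq0; apply/eqP/setP=> S; rewrite !inE.
  apply/negP => /andP[/orP[/orP[/F1c h|/eqP->]|/F3ac h] /F3bc h'].
  - by move: h'; rewrite (negPf h).
  - by move: h'; rewrite !inE !eqxx orbT.
  - by move: h h' => /and3P[_ _ /negPf ->] /and3P[].
rewrite sumU; last first.
  rewrite -setI_eq0; apply/eqP/setP=> S; rewrite !inE.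
  apply/negP => /andP[/orP[/F1c h|/eqP->] /F3ac h'].
  - by move: h'; rewrite (negPf h).
  - by move: h'; rewrite !inE !eqxx orbT.
rewrite sumU; last first.
  rewrite -setI_eq0; apply/eqP/setP=> S; rewrite !inE.
  apply/negP => /andP[/F1c /negPf h /eqP E]; by move: h; rewrite E !inE eqxx.
rewrite /F1 /F2 /F3a /F3b big_set1 !big_imset //.
all: try by move=> i j hi hj /setP /(_ i); rewrite !inE eqxx; lclean hi; rewrite /= ?orbT ?orbF => /esym /eqP.
move=> X Y; rewrite !powersetE => hX hY e.
  apply/setP=> z; move/setP: e => /(_ z); rewrite !inE.
  case hz: (z \in Lset).
    by lclean hz.
  have -> : (z \in X) = false by apply/negP=> /(subsetP hX); rewrite hz.
  by have -> : (z \in Y) = false by apply/negP=> /(subsetP hY); rewrite hz.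
Qed.


Lemma sigmaE : sigma1 (Rrel N) = 2 ^ k.+1 + 1 + k.+1 + k.+1.
Proof.
rewrite /sigma1 -sum1_card (eq_bigl (fun S => nearly_indep1 (Rrel N) S)); last by move=> S; rewrite inE.
by rewrite sumFam !sum_nat_const card_powerset cardL !muln1.
Qed.

End R.

Lemma sum_card_powerset (T : finType) (A : {set T}) :
  2 * \sum_(X in powerset A) #|X| = #|A| * 2 ^ #|A|.
Proof.
have inv : forall X, X \in powerset A -> A :\: (A :\: X) = X.
  move=> X; rewrite powersetE => hX.
  by rewrite setDDr setDv set0U; apply/setIidPr.
have e : \sum_(X in powerset A) #|X| = \sum_(X in powerset A) #|A :\: X|.
  have E : powerset A = [set A :\: X | X in powerset A].
    apply/setP=> Y; apply/idP/imsetP => [hY|[X hX ->]].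
      by exists (A :\: Y); [rewrite powersetE subsetDl | rewrite inv].
    by rewrite powersetE subsetDl.
  rewrite {1}E big_imset /=; last first.
    by move=> X Y hX hY eXY; rewrite -(inv X hX) -(inv Y hY) eXY.
  by [].
rewrite mul2n -addnn {2}e -big_split /=.
rewrite (eq_bigr (fun _ => #|A|)); first by rewrite sum_nat_const card_powerset mulnC.
move=> X; rewrite powersetE => hX.
by rewrite -[in RHS](cardsID X A); move/setIidPr: hX => ->.
Qed.

Ltac lclean h := let e1 := fresh in let e2 := fresh in let e3 := fresh in
  let e4 := fresh in let e5 := fresh in let e6 := fresh in
  case: (Lne h) => e1 [e2 [e3 [e4 [e5 e6]]]]; rewrite ?e1 ?e2 ?e3 ?e4 ?e5 ?e6 ?h.

Lemma S1E k : S1 (Rrel k.+4) = (k + 5) * 2 ^ k + 5 * k + 7.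
Proof.
rewrite /S1 sumFam.
have -> : \sum_(X in powerset (Lset k)) #|v1 k |: (vl k |: X)| =
          \sum_(X in powerset (Lset k)) (2 + #|X|).
  apply: eq_bigr => X; rewrite powersetE => hX.
  have h1 : (v1 k \in X) = false by apply/negP=> /(subsetP hX); rewrite L1.
  have hl : (vl k \in X) = false by apply/negP=> /(subsetP hX); rewrite Ll.
  by rewrite !cardsU1 !inE !dE h1 hl.
have -> : \sum_(i in Lset k) #|v0 k |: [set i]| = \sum_(i in Lset k) 2.
  by apply: eq_bigr => i hi; rewrite cardsU1 cards1 !inE; lclean hi.
have -> : \sum_(i in Lset k) #|v0 k |: (vl k |: [set i])| = \sum_(i in Lset k) 3.
  by apply: eq_bigr => i hi; rewrite !cardsU1 cards1 !inE !dE /=; lclean hi.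
rewrite big_split /= !sum_nat_const card_powerset cardL cards2 d01.
have := sum_card_powerset (Lset k); rewrite cardL expnS.
move: (\sum_(X in _) _) (2 ^ k) => s p h /=.
nia.
Qed.

From mathcomp Require Import ring lra.
Local Open Scope ring_scope.

Lemma avE k : av1 (Rrel k.+4) =
  ((k%:R + 5) * 2 ^+ k + 5 * k%:R + 7) / (2 * 2 ^+ k + 2 * k%:R + 3) :> rat.
Proof.
rewrite /av1 S1E sigmaE expnS -[k.+1]addn1 !natrD !natrM !natrX; congr (_ / _); ring.
Qed.

Lemma pow_big (k : nat) : ((k + 1) ^ 3 <= 8 * 2 ^ k)%N.
Proof.
elim: k => [|k IH] //.
case: (leqP k 2) => hk.
  by case: k hk IH => [|[|[|]]].
have e : (k.+1 + 1 = k + 2)%N by lia.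
rewrite e [(2 ^ k.+1)%N]expnS.
have h : ((k + 2) ^ 3 <= 2 * (k + 1) ^ 3)%N.
  rewrite !expnS expn0 !muln1; nia.
move: h IH; move: ((k + 2) ^ 3)%N ((k + 1) ^ 3)%N (2 ^ k)%N => a b c; lia.
Qed.

Lemma pow_lin (k : nat) : (3 <= k)%N -> (4 * k + 3 <= 2 * 2 ^ k)%N.
Proof.
elim: k => [|k IH] //; case: (leqP k 2) => hk.
  by case: k hk IH => [|[|[|]]].
move=> _; have := IH hk; rewrite expnS; have : (1 <= 2 ^ k)%N by rewrite expn_gt0.
lia.
Qed.

Lemma pow_quad (k : nat) : (k != 2)%N -> (k != 3)%N -> (k != 4)%N ->
  (2 * k ^ 2 + k < 2 * 2 ^ k + 2)%N.
Proof.
move=> h2 h3 h4.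
case: (leqP k 4) => hk.
  by case: k hk h2 h3 h4 => [|[|[|[|[|]]]]].
elim: k hk {h2 h3 h4} => [|k IH] //; case: (leqP k 4) => hk hk'.
  by have -> : k = 4%N by lia.
have := IH hk; have := pow_lin (ltnW (ltnW hk)); rewrite expnS !expnS expn0 !muln1.
move: (2 ^ k)%N => p; nia.
Qed.

Theorem mainTheorem12 :
  (forall n : nat, (4 <= n)%N ->
     av1 (Rrel n)
       = (5 * n%:R - 13 + (n%:R + 1) * 2 ^+ (n - 4)) / (2 * n%:R - 5 + 2 ^+ (n - 3))
     /\ av1 (Rrel n)
       = (n%:R + 1) / 2 - (n%:R ^+ 2 - 13 / 2 * n%:R + 21 / 2) / (2 * n%:R - 5 + 2 ^+ (n - 3))
     /\ av1 (Rrel n)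
       = n%:R / 2 + (2 ^+ (n - 4) - n%:R ^+ 2 + 15 / 2 * n%:R - 13) / (2 * n%:R - 5 + 2 ^+ (n - 3))) /\
  (forall n : nat, (4 <= n)%N -> av1 (Rrel n) < (n%:R + 1) / 2) /\
  (forall n : nat, (4 <= n)%N -> n \notin [:: 6; 7; 8]%N -> n%:R / 2 < av1 (Rrel n)) /\
  (forall eps : rat, 0 < eps -> exists N : nat, forall n : nat, (N <= n)%N ->
     `|av1 (Rrel n) - (n%:R + 1) / 2| < eps).
Proof.
have nE : forall k, (k.+4)%:R = k%:R + 4 :> rat by move=> k; rewrite -addn4 natrD.
have base : forall k : nat, 0 <= k%:R :> rat /\ 0 < 2 ^+ k :> rat.
  by move=> k; split; [exact: ler0n | exact: exprn_gt0].
have Dpos : forall k : nat, 0 < 2 * 2 ^+ k + 2 * k%:R + 3 :> rat.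
  by move=> k; have [h1 h2] := base k; lra.
split; [|split; [|split]].
- move=> n; case: n => [|[|[|[|k]]]] // _.
  rewrite avE nE.
  have -> : (k.+4 - 4)%N = k by lia.
  have -> : (k.+4 - 3)%N = k.+1 by lia.
  have [h1 h2] := base k; have hD := Dpos k.
  rewrite exprS.
  have hD' : 2 * (k%:R + 4) - 5 + 2 * 2 ^+ k != 0 :> rat by apply/eqP; lra.
  have hD0 : 2 * 2 ^+ k + 2 * k%:R + 3 != 0 :> rat by apply/eqP; lra.
  split; [|split]; field; apply/eqP; lra.
- move=> n; case: n => [|[|[|[|k]]]] // _.
  rewrite avE nE ltr_pdivrMr ?Dpos //.
  have [h1 h2] := base k; nra.
- move=> n; case: n => [|[|[|[|k]]]] // _.
  rewrite !inE /= => /norP [h2 /norP [h3 h4]].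
  have := pow_quad h2 h3 h4; rewrite -(ltr_nat rat) !natrD !natrM !natrX => hq.
  rewrite avE nE ltr_pdivlMr ?Dpos //.
  have [h1 h0] := base k; nra.
move=> eps he.
have [d hd] := denqP eps.
have hed : 1 <= eps * (d.+1)%:R.
  have := numqE eps; rewrite hd => <-.
  by rewrite ler1z -gtz0_ge1 numq_gt0.
exists (4 * d.+1 + 4)%N => n hn.
have hn4 : (4 <= n)%N by lia.
case: n hn hn4 => [|[|[|[|k]]]] // hk _.
have hk' : (4 * d.+1 < k.+1)%N by lia.
have := pow_big k; rewrite -(ler_nat rat) !natrM !natrX natrD => hb.
have hK : 4 * (d.+1)%:R < k%:R + 1 :> rat.
  by rewrite -natrM natr1 ltr_nat.
have [h1 h2] := base k; have hD := Dpos k.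
set p := 2 ^+ k : rat in hb h2 hD *.
set K := k%:R + 1 : rat in hb hK *.
set d1 := (d.+1)%:R : rat in hed hK.
have -> : av1 (Rrel k.+4) - ((k.+4)%:R + 1) / 2 =
    - ((k%:R ^+ 2 + 3 / 2 * k%:R + 1 / 2) / (2 * p + 2 * k%:R + 3)).
  rewrite avE nE /p; field; apply/eqP; have := Dpos k; lra.
have hQ : 0 <= k%:R ^+ 2 + 3 / 2 * k%:R + 1 / 2 :> rat by nra.
rewrite normrN ger0_norm; last by apply: divr_ge0 => //; apply: ltW.
rewrite ltr_pdivrMr //.
have hK1 : 1 <= K by rewrite /K; lra.
have s1 : k%:R ^+ 2 + 3 / 2 * k%:R + 1 / 2 <= K ^+ 2 by rewrite /K; nra.
have hK2 : 0 < K ^+ 2 by nra.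
have s2 : K ^+ 2 <= eps * d1 * K ^+ 2 by nra.
have heK : 0 < eps * K ^+ 2 by nra.
have s3 : eps * d1 * K ^+ 2 < eps * (K / 4) * K ^+ 2 by nra.
have s4 : eps * (K / 4) * K ^+ 2 <= eps * (2 * p).
  rewrite expr2; nra.
have s5 : eps * (2 * p) <= eps * (2 * p + 2 * k%:R + 3) by nra.
lra.
Qed.
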